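(* Let $q\geq 3$ and $n\ge 2$. Consider the graph whose vertices are the $n\times n$ hermitian matrices over $\mathbb{F}_{q^2}$ of rank $n-1$, with $A,B$ adjacent iff $\operatorname{rank}(A-B)=1$. This graph has exactly $\frac{q^{2n}-1}{q^2-1}$ connected components, and these are precisely the sets $$\{P(\dot X\oplus 0)P^\ast:\ \dot X\in\mathcal{HGL}_{n-1}(\mathbb{F}_{q^2})\},$$ where $P$ ranges over invertible $n\times n$ matrices; each component is isomorphic to the graph on $\mathcal{HGL}_{n-1}(\mathbb{F}_{q^2})$ (with adjacency $\operatorname{rank}(A-B)=1$).
   Context: $\mathbb{F}_{q^2}$ is the field with $q^2$ elements with involution $\bar x=x^q$; $X^\ast=\bar X^\top$; hermitian means $A^\ast=A$; $\mathcal{HGL}_{m}(\mathbb{F}_{q^2})$ is the set of invertible $m\times m$ hermitian matrices over $\mathbb{F}_{q^2}$. *)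

(* Defs.v *)
From HB Require Import structures.
From mathcomp Require Import all_boot all_order all_algebra.
Set Implicit Arguments. Unset Strict Implicit. Unset Printing Implicit Defensive.
Import GRing.Theory.
Local Open Scope ring_scope.

(* Conjugate transpose X^* = (bar X)^T with bar x = x^q. *)
Definition conjT (F : fieldType) (q : nat) (m : nat) (A : 'M[F]_m) : 'M[F]_m :=
  (map_mx (fun x => x ^+ q) A)^T.

Definition hermitian (F : fieldType) (q m : nat) (A : 'M[F]_m) : bool :=
  conjT q A == A.

Definition HGL (F : finFieldType) (q m : nat) : {set 'M[F]_m} :=
  [set A : 'M[F]_m | hermitian q A && (A \in unitmx)].

(* X (+) 0 : the (n-1)x(n-1) matrix X padded by a zero last row and column *)
Definition pad0 (F : fieldType) (n : nat) (X : 'M[F]_(n.-1)) : 'M[F]_n :=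
  \matrix_(i < n, j < n)
    match @insub nat (fun k => k < n.-1)%N 'I_(n.-1) (val i),
          @insub nat (fun k => k < n.-1)%N 'I_(n.-1) (val j) with
    | Some i', Some j' => X i' j'
    | _, _ => 0
    end.

Definition Vrk (F : finFieldType) (q n : nat) : {set 'M[F]_n} :=
  [set A : 'M[F]_n | hermitian q A && (\rank A == n.-1)%N].

Definition adjV (F : finFieldType) (q n : nat) : rel 'M[F]_n :=
  fun A B => [&& A \in @Vrk F q n, B \in @Vrk F q n & (\rank (A - B)%R == 1)%N].

Definition components (F : finFieldType) (q n : nat) : {set {set 'M[F]_n}} :=
  [set [set B | connect (@adjV F q n) A B] | A in @Vrk F q n].

Definition Sset (F : finFieldType) (q n : nat) (P : 'M[F]_n) : {set 'M[F]_n} :=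
  [set P *m pad0 X *m conjT q P | X in @HGL F q n.-1].

(* Main.v *)
Require Import Defs.
From HB Require Import structures.
From mathcomp Require Import all_boot all_order all_algebra all_fingroup all_solvable all_field.
From mathcomp Require Import ring zify.
Set Implicit Arguments. Unset Strict Implicit. Unset Printing Implicit Defensive.
Import GRing.Theory.
Local Open Scope ring_scope.

Section Pad.
Variables (F : fieldType) (m : nat).

Lemma pad0_ll (X : 'M[F]_m) i j : @pad0 F m.+1 X (lift ord_max i) (lift ord_max j) = X i j.
Proof.
rewrite mxE (_ : \val (lift ord_max i) = \val i); last exact: lift_max.
rewrite (_ : \val (lift ord_max j) = \val j); last exact: lift_max.
by rewrite !valK.
Qed.
Lemma pad0_ml (X : 'M[F]_m) j : @pad0 F m.+1 X ord_max j = 0.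
Proof. by rewrite mxE /= insubN ?ltnn. Qed.
Lemma pad0_lm (X : 'M[F]_m) j : @pad0 F m.+1 X j ord_max = 0.
Proof. by rewrite mxE /=; case: insub => // ?; rewrite insubF //= ltnn. Qed.

Definition Emx : 'M[F]_(m.+1, m) := \matrix_(i, j) (i == lift ord_max j)%:R.

Lemma sum_delta k (f : 'I_k -> F) c : \sum_l f l * (l == c)%:R = f c.
Proof.
rewrite (bigD1 c) //= eqxx mulr1 big1 ?addr0 // => l /negbTE ->; by rewrite mulr0.
Qed.
Lemma sum_delta' k (f : 'I_k -> F) c : \sum_l (l == c)%:R * f l = f c.
Proof. by rewrite -(sum_delta f c); apply: eq_bigr => l _; rewrite mulrC. Qed.

Lemma E_l i l : Emx (lift ord_max i) l = (l == i)%:R.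
Proof. by rewrite mxE (inj_eq lift_inj) eq_sym. Qed.
Lemma E_m l : Emx ord_max l = 0.
Proof. by rewrite mxE eq_liftF. Qed.

Lemma EtE : Emx^T *m Emx = 1%:M.
Proof.
apply/matrixP=> i j; rewrite !mxE.
rewrite (bigD1 (lift ord_max i)) //= !mxE !eqxx mul1r (inj_eq lift_inj) big1 ?addr0.
  by rewrite eq_sym.
by move=> a ha; rewrite !mxE (negbTE ha) mul0r.
Qed.

Lemma EXEt_ll (X : 'M[F]_m) i j : (Emx *m X *m Emx^T) (lift ord_max i) (lift ord_max j) = X i j.
Proof.
rewrite mxE (eq_bigr (fun k => X i k * (k == j)%:R)); first exact: sum_delta.
move=> k _; rewrite [Emx^T _ _]mxE E_l; congr (_ * _).
rewrite mxE (eq_bigr (fun l => (l == i)%:R * X l k)); first exact: sum_delta'.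
by move=> l _; rewrite E_l.
Qed.
Lemma EXEt_ml (X : 'M[F]_m) j : (Emx *m X *m Emx^T) ord_max j = 0.
Proof. by rewrite -mulmxA mxE big1 // => k _; rewrite mxE eq_liftF mul0r. Qed.
Lemma EXEt_lm (X : 'M[F]_m) j : (Emx *m X *m Emx^T) j ord_max = 0.
Proof. by rewrite mxE big1 // => k _; rewrite !mxE eq_liftF mulr0. Qed.

Lemma pad0E (X : 'M[F]_m) : @pad0 F m.+1 X = Emx *m X *m Emx^T.
Proof.
apply/matrixP=> a b.
case: (unliftP ord_max a) => [i ->|->]; last by rewrite pad0_ml EXEt_ml.
case: (unliftP ord_max b) => [j ->|->]; last by rewrite pad0_lm EXEt_lm.
by rewrite pad0_ll EXEt_ll.
Qed.

Lemma pad0K (X : 'M[F]_m) : Emx^T *m @pad0 F m.+1 X *m Emx = X.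
Proof. by rewrite pad0E !mulmxA EtE mul1mx -mulmxA EtE mulmx1. Qed.

Lemma pad0B (X Y : 'M[F]_m) : @pad0 F m.+1 (X - Y) = @pad0 F m.+1 X - @pad0 F m.+1 Y.
Proof. by rewrite !pad0E mulmxBr mulmxBl. Qed.

Lemma pad0_inj : injective (@pad0 F m.+1).
Proof. by move=> X Y h; rewrite -(pad0K X) -(pad0K Y) h. Qed.

Lemma rank_pad0 (X : 'M[F]_m) : \rank (@pad0 F m.+1 X) = \rank X.
Proof.
apply/eqP; rewrite eqn_leq; apply/andP; split.
  by rewrite pad0E; apply: leq_trans (mxrankM_maxl _ _) _; apply: mxrankM_maxr.
by rewrite -{1}(pad0K X); apply: leq_trans (mxrankM_maxl _ _) _; apply: mxrankM_maxr.
Qed.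

Lemma EtBE (B : 'M[F]_m.+1) i j : (Emx^T *m B *m Emx) i j = B (lift ord_max i) (lift ord_max j).
Proof.
rewrite mxE (eq_bigr (fun k => B (lift ord_max i) k * (k == lift ord_max j)%:R)) ?sum_delta // => k _.
rewrite mxE (eq_bigr (fun l => (l == lift ord_max i)%:R * B l k)) ?sum_delta' //.
  by rewrite mxE.
by move=> l _; rewrite !mxE.
Qed.

Lemma w_E0 (w : 'rV[F]_m.+1) : w *m Emx = 0 -> w = w 0 ord_max *: delta_mx 0 ord_max.
Proof.
move=> h; apply/matrixP=> a b; rewrite !mxE !ord1 eqxx /=.
case: (unliftP ord_max b) => [j ->|->]; last by rewrite eqxx mulr1.
rewrite eq_sym eq_liftF mulr0.
move/matrixP: h => /(_ 0 j); rewrite !mxE => <-.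
by rewrite (eq_bigr (fun k => w 0 k * (k == lift ord_max j)%:R)) ?sum_delta // => k _; rewrite mxE.
Qed.

Lemma ker_pad0 (X : 'M[F]_m) (w : 'rV[F]_m.+1) : X \in unitmx -> w *m @pad0 F m.+1 X = 0 ->
  w = w 0 ord_max *: delta_mx 0 ord_max.
Proof.
move=> uX h; apply: w_E0.
have : w *m @pad0 F m.+1 X *m Emx *m invmx X = 0 by rewrite h !mul0mx.
by rewrite pad0E !mulmxA -(mulmxA _ _ Emx) EtE mulmx1 mulmxK.
Qed.

Lemma max_pad0 (X : 'M[F]_m) : (delta_mx 0 ord_max : 'rV[F]_m.+1) *m @pad0 F m.+1 X = 0.
Proof. by rewrite -rowE; apply/rowP=> j; rewrite mxE [RHS]mxE; exact: pad0_ml. Qed.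
End Pad.

Section Sig.
Variables (F : finFieldType) (q : nat).
Hypothesis hF : #|F| = (q ^ 2)%N.

Lemma sig_pnat : [pchar F].-nat q.
Proof.
have [p _ chp] := finPcharP F.
rewrite (eq_pnat _ (pcharf_eq chp)).
apply: (@pnat_dvd _ #|[set: F]%G|).
  by rewrite cardsT hF expnS expn1 dvdn_mulr.
by case/and3P: (fin_ring_pchar_abelem chp).
Qed.

Hypothesis hq0 : (0 < q)%N.
Definition sig (x : F) := x ^+ q.

Lemma sig_is_nmod : nmod_morphism sig.
Proof. split=> [|x y]; rewrite /sig; first by rewrite expr0n eqn0Ngt hq0.
exact: exprDn_pchar sig_pnat. Qed.
Lemma sig_is_monoid : monoid_morphism sig.
Proof. by split=> [|x y]; rewrite /sig ?expr1n ?exprMn. Qed.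
HB.instance Definition _ := GRing.isNmodMorphism.Build F F sig sig_is_nmod.
HB.instance Definition _ := GRing.isMonoidMorphism.Build F F sig sig_is_monoid.
Lemma sigK x : sig (sig x) = x.
Proof. by rewrite /sig -exprM mulnn -hF expf_card. Qed.

Definition ctr m n (A : 'M[F]_(m, n)) : 'M[F]_(n, m) := (map_mx sig A)^T.

Lemma ctrE m n (A : 'M[F]_(m, n)) i j : ctr A i j = sig (A j i).
Proof. by rewrite !mxE. Qed.
Lemma ctrM m n p (A : 'M[F]_(m, n)) (B : 'M[F]_(n, p)) : ctr (A *m B) = ctr B *m ctr A.
Proof. by rewrite /ctr map_mxM trmx_mul. Qed.
Lemma ctrD m n (A B : 'M[F]_(m, n)) : ctr (A + B) = ctr A + ctr B.
Proof. by rewrite /ctr map_mxD linearD. Qed.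
Lemma ctrN m n (A : 'M[F]_(m, n)) : ctr (- A) = - ctr A.
Proof. by rewrite /ctr map_mxN linearN. Qed.
Lemma ctrB m n (A B : 'M[F]_(m, n)) : ctr (A - B) = ctr A - ctr B.
Proof. by rewrite ctrD ctrN. Qed.
Lemma ctr0 m n : ctr (0 : 'M[F]_(m, n)) = 0.
Proof. by rewrite /ctr map_mx0 trmx0. Qed.
Lemma ctrZ m n a (A : 'M[F]_(m, n)) : ctr (a *: A) = sig a *: ctr A.
Proof. by rewrite /ctr map_mxZ linearZ. Qed.
Lemma ctr1 m : ctr (1%:M : 'M[F]_m) = 1%:M.
Proof. by rewrite /ctr map_mx1 trmx1. Qed.
Lemma ctrK m n (A : 'M[F]_(m, n)) : ctr (ctr A) = A.
Proof. by apply/matrixP=> i j; rewrite !ctrE sigK. Qed.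
Lemma ctr_unit m (A : 'M[F]_m) : (ctr A \in unitmx) = (A \in unitmx).
Proof. by rewrite /ctr unitmx_tr map_unitmx. Qed.
Lemma ctr_inv m (A : 'M[F]_m) : ctr (invmx A) = invmx (ctr A).
Proof. by rewrite /ctr map_invmx trmx_inv. Qed.
Lemma ctr_rank m n (A : 'M[F]_(m, n)) : \rank (ctr A) = \rank A.
Proof. by rewrite /ctr mxrank_tr mxrank_map. Qed.
Lemma ctr_eq0 m n (A : 'M[F]_(m, n)) : (ctr A == 0) = (A == 0).
Proof. by rewrite /ctr trmx_eq0 map_mx_eq0. Qed.

Lemma sig_nat k : sig k%:R = k%:R.
Proof. exact: rmorph_nat. Qed.

Definition hf m (M : 'M[F]_m) (x y : 'rV[F]_m) : F := (x *m M *m ctr y) 0 0.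

Definition P4 (a b c d : F) : {poly F} := a%:P + b *: 'X + c *: 'X^q + d *: 'X^(q.+1).

Lemma P4E a b c d t : (P4 a b c d).[t] = a + b * t + c * sig t + d * (t * sig t).
Proof. rewrite /P4 !hornerE /sig exprS; simpl; by rewrite mulrA. Qed.

Hypothesis hq3 : (3 <= q)%N.

Lemma P4_coefq a b c d : (P4 a b c d)`_q = c.
Proof.
rewrite /P4 !coefD !coefZ coefC coefX !coefXn eqxx.
have -> : (q == 0%N) = false by apply/eqP; lia.
have -> : (q == 1%N) = false by apply/eqP; lia.
have -> : (q == q.+1) = false by apply/eqP; lia.
by rewrite !mulr0 mulr1 !add0r addr0.
Qed.
Lemma P4_coef0 a b c d : (P4 a b c d)`_0 = a.
Proof.
rewrite /P4 !coefD !coefZ coefC coefX !coefXn eqxx.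
have -> : (0%N == q) = false by apply/eqP; lia.
by rewrite !mulr0 !addr0.
Qed.
Lemma P4_coefS a b c d : (P4 a b c d)`_q.+1 = d.
Proof.
rewrite /P4 !coefD !coefZ coefC coefX !coefXn eqxx.
have -> : (q.+1 == q) = false by apply/eqP; lia.
have -> : (q.+1 == 1%N) = false by apply/eqP; lia.
by rewrite !mulr0 mulr1 !add0r.
Qed.
Lemma P4_size a b c d : (size (P4 a b c d) <= q.+2)%N.
Proof.
rewrite /P4; apply: leq_trans (size_add _ _) _; rewrite geq_max; apply/andP; split; last first.
  by apply: leq_trans (size_scale_leq _ _) _; rewrite size_polyXn.
apply: leq_trans (size_add _ _) _; rewrite geq_max; apply/andP; split; last first.
  by apply: leq_trans (size_scale_leq _ _) _; rewrite size_polyXn; lia.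
apply: leq_trans (size_add _ _) _; rewrite geq_max; apply/andP; split.
  by apply: leq_trans (size_polyC_leq1 _) _; lia.
by apply: leq_trans (size_scale_leq _ _) _; rewrite size_polyX; lia.
Qed.

Lemma hf_expand m (M : 'M[F]_m) z1 z2 t :
  hf M (z1 + t *: z2) (z1 + t *: z2) =
  (P4 (hf M z1 z1) (hf M z2 z1) (hf M z1 z2) (hf M z2 z2)).[t].
Proof.
rewrite P4E /hf ctrD ctrZ !mulmxDl !mulmxDr -!scalemxAl -!scalemxAr !mxE.
ring.
Qed.

Lemma nonroot (p : {poly F}) : p != 0 -> (size p <= #|F|)%N -> exists t, p.[t] != 0.
Proof.
move=> p0 sz; case: (pickP (fun t => p.[t] != 0)) => [t Ht|H0]; first by exists t.
have := @max_poly_roots _ p (enum F) p0.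
rewrite enum_uniq -cardE.
have -> : all (root p) (enum F).
  by apply/allP => t _; rewrite /root; move: (H0 t) => /= /negbFE.
by move=> /(_ isT isT); rewrite ltnNge sz.
Qed.

Lemma ctr_delta m (i : 'I_m) : ctr (delta_mx 0 i : 'rV[F]_m) = delta_mx i 0.
Proof.
apply/matrixP=> a b; rewrite ctrE !mxE.
by rewrite andbC; case: (_ && _); rewrite ?sig_nat.
Qed.

Lemma hf_delta m (M : 'M[F]_m) i j : hf M (delta_mx 0 i) (delta_mx 0 j) = M i j.
Proof. by rewrite /hf ctr_delta -rowE -colE !mxE. Qed.

Lemma L0 m (H : 'M[F]_m) : H != 0 -> exists z, hf H z z != 0.
Proof.
move=> H0.
case: (pickP (fun ij : 'I_m * 'I_m => H ij.1 ij.2 != 0)) => [[i j] /= Hij|Hn]; last first.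
  case/eqP: H0; apply/matrixP=> i j; rewrite mxE.
  by move: (Hn (i, j)) => /= /negbFE/eqP.
pose p := P4 (hf H (delta_mx 0 i) (delta_mx 0 i)) (hf H (delta_mx 0 j) (delta_mx 0 i))
  (hf H (delta_mx 0 i) (delta_mx 0 j)) (hf H (delta_mx 0 j) (delta_mx 0 j)).
have pn0 : p != 0.
  apply: contra_neq Hij => hp.
  by rewrite -(hf_delta H) -(P4_coefq (hf H (delta_mx 0 i) (delta_mx 0 i)) (hf H (delta_mx 0 j) (delta_mx 0 i)) (hf H (delta_mx 0 i) (delta_mx 0 j)) (hf H (delta_mx 0 j) (delta_mx 0 j))) -/p hp coef0.
have [|t Ht] := nonroot pn0.
  by apply: leq_trans (P4_size _ _ _ _) _; rewrite hF; nia.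
by exists (delta_mx 0 i + t *: delta_mx 0 j); rewrite hf_expand.
Qed.

Lemma L2 m (H K : 'M[F]_m) : H != 0 -> K != 0 -> exists z, hf H z z != 0 /\ hf K z z != 0.
Proof.
move=> /L0 [z1 h1] /L0 [z2 h2].
pose p1 := P4 (hf H z1 z1) (hf H z2 z1) (hf H z1 z2) (hf H z2 z2).
pose p2 := P4 (hf K z1 z1) (hf K z2 z1) (hf K z1 z2) (hf K z2 z2).
have p1n0 : p1 != 0.
  by apply: contra_neq h1 => hp; rewrite -(P4_coef0 (hf H z1 z1) (hf H z2 z1) (hf H z1 z2) (hf H z2 z2)) -/p1 hp coef0.
have p2n0 : p2 != 0.
  by apply: contra_neq h2 => hp; rewrite -(P4_coefS (hf K z1 z1) (hf K z2 z1) (hf K z1 z2) (hf K z2 z2)) -/p2 hp coef0.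
have [|t Ht] := nonroot (mulf_neq0 p1n0 p2n0).
  apply: leq_trans (size_mul_leq _ _) _.
  have := P4_size (hf H z1 z1) (hf H z2 z1) (hf H z1 z2) (hf H z2 z2).
  have := P4_size (hf K z1 z1) (hf K z2 z1) (hf K z1 z2) (hf K z2 z2).
  rewrite -/p1 -/p2 hF; nia.
exists (z1 + t *: z2); rewrite !hf_expand -/p1 -/p2.
by move: Ht; rewrite hornerM mulf_eq0 negb_or => /andP.
Qed.


Lemma mx11_mul n (M : 'M[F]_1) (A : 'M[F]_(1, n)) : M *m A = M 0 0 *: A.
Proof. by rewrite {1}[M]mx11_scalar mul_scalar_mx. Qed.

Lemma sig_hf m (M : 'M[F]_m) z : ctr M = M -> sig (hf M z z) = hf M z z.
Proof. by move=> hM; rewrite /hf -ctrE !ctrM ctrK hM mulmxA. Qed.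

Lemma rank_outer n (w : 'rV[F]_n) c : w != 0 -> c != 0 -> \rank (c *: (ctr w *m w)) = 1%N.
Proof.
move=> w0 c0; rewrite (eqmx_scale _ c0).
apply/eqP; rewrite eqn_leq; apply/andP; split.
  by apply: leq_trans (mxrankM_maxr _ _) (rank_leq_row _).
rewrite lt0n mxrank_eq0.
case: (pickP (fun k => w 0 k != 0)) => [k wk|Hn]; last first.
  case/eqP: w0; apply/matrixP=> i j; rewrite !ord1 mxE.
  by move: (Hn j) => /negbFE/eqP.
apply/eqP => /matrixP /(_ k k); rewrite !mxE big_ord1 ctrE => /eqP.
by rewrite mulf_eq0 fmorph_eq0 (negbTE wk).
Qed.

Lemma unit_of_ker m (Z : 'M[F]_m) : (forall v : 'rV_m, v *m Z = 0 -> v = 0) -> Z \in unitmx.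
Proof.
move=> hk; rewrite -row_free_unit -kermx_eq0; apply/eqP/row_matrixP => i.
by rewrite row0; apply: hk; rewrite -row_mul mulmx_ker row0.
Qed.

Lemma step m (X Y : 'M[F]_m) : ctr X = X -> ctr Y = Y -> X \in unitmx ->
  Y \in unitmx -> Y - X != 0 ->
  exists Z, [/\ ctr Z = Z, Z \in unitmx, \rank (Z - X) = 1%N & (\rank (Y - Z)%R < \rank (Y - X)%R)%N].
Proof.
move=> hX hY uX uY H0.
set H := Y - X.
have hH : ctr H = H by rewrite /H ctrB hX hY.
set K := H + H *m invmx X *m H.
have KE : K = H *m (invmx X *m Y).
  have YE : Y = X + H by rewrite /H addrC subrK.
  by rewrite [in RHS]YE mulmxA mulmxDr mulmxKV.
have K0 : K != 0.
  apply: contra_neq H0 => K0; have : K *m invmx (invmx X *m Y) = 0 by rewrite K0 mul0mx.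
  by rewrite KE mulmxK // unitmx_mul unitmx_inv uX.
have hK : ctr K = K by rewrite /K ctrD !ctrM ctr_inv hX hH mulmxA.
have [z [hz1 hz2]] := L2 H0 K0.
set s := hf H z z.
set w := z *m H.
set c := s^-1.
have c0 : c != 0 by rewrite invr_eq0.
have w0 : w != 0 by apply: contra_neq hz1; rewrite /s /hf -/w => ->; rewrite !mul0mx mxE.
have sc : sig c = c.
  by rewrite /c fmorphV; congr (_^-1); exact: sig_hf.
have ctrw : ctr w = H *m ctr z by rewrite /w ctrM hH.
have zw : z *m ctr w = s%:M by rewrite ctrw mulmxA [LHS]mx11_scalar.
set Z := X + c *: (ctr w *m w).
have ZX : Z - X = c *: (ctr w *m w) by rewrite /Z addrAC subrr add0r.
exists Z; split.
- by rewrite /Z ctrD ctrZ ctrM ctrK hX sc.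
- apply: unit_of_ker => v.
  rewrite /Z mulmxDr -scalemxAr mulmxA mx11_mul.
  set al := (v *m ctr w) 0 0 => hv.
  have vX : v *m X = - (c * al) *: w.
    by apply/eqP; rewrite scaleNr -scalerA -subr_eq0 opprK hv.
  have vE : v = - (c * al) *: (w *m invmx X) by rewrite scalemxAl -vX mulmxK.
  have : al = - (c * al) * (w *m invmx X *m ctr w) 0 0.
    by rewrite /al {1}vE -scalemxAl mxE.
  move/eqP; rewrite -subr_eq0 mulNr opprK.
  rewrite (_ : al + c * al * (w *m invmx X *m ctr w) 0 0 = al * (1 + c * (w *m invmx X *m ctr w) 0 0)); last by ring.
  rewrite mulf_eq0.
  have -> : (1 + c * (w *m invmx X *m ctr w) 0 0 == 0) = false.
    apply/negbTE; rewrite -(mulVf (hz1)) -/s -/c -mulrDr mulf_neq0 //.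
    move: hz2; rewrite /hf /K mulmxDr mulmxDl mxE ctrw /w !mulmxA.
    by rewrite /s /hf.
  rewrite orbF => /eqP al0.
  by move: vE; rewrite al0 mulr0 oppr0 scale0r => ->.
- by rewrite ZX rank_outer.
have -> : Y - Z = H - c *: (ctr w *m w) by rewrite /Z opprD addrA.
set H' := H - _.
have s1 : (kermx H <= kermx H')%MS.
  by rewrite sub_kermx mulmxBr mulmx_ker -scalemxAr mulmxA ctrw (mulmxA (kermx H)) mulmx_ker !mul0mx scaler0 subr0.
have s2 : (z <= kermx H')%MS.
  by rewrite sub_kermx mulmxBr -scalemxAr mulmxA zw mul_scalar_mx scalerA mulVf // scale1r subrr.
have s3 : ~~ (z <= kermx H)%MS by rewrite sub_kermx.
have : (kermx H < kermx H')%MS.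
  by rewrite ltmxE s1 /=; apply: contra s3 => /(submx_trans s2).
rewrite ltmxErank s1 /= !mxrank_ker.
have := rank_leq_row H; have := rank_leq_row H'; lia.
Qed.

Lemma rank_subC m n (A B : 'M[F]_(m, n)) : \rank (A - B) = \rank (B - A).
Proof. by rewrite -mxrank_opp opprB. Qed.

Lemma hgl_connect m (T : finType) (e : rel T) (f : 'M[F]_m -> T) :
  (forall X Y, ctr X = X -> ctr Y = Y -> X \in unitmx -> Y \in unitmx ->
     \rank (X - Y) = 1%N -> e (f X) (f Y)) ->
  forall X Y, ctr X = X -> ctr Y = Y -> X \in unitmx -> Y \in unitmx ->
  connect e (f X) (f Y).
Proof.
move=> he X Y hX hY uX uY.
suff: forall r X, (\rank (Y - X)%R <= r)%N -> ctr X = X -> X \in unitmx -> connect e (f X) (f Y).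
  by apply; rewrite ?leqnn.
elim=> [|r IH] {hX uX}X hr hX uX.
  move: hr; rewrite leqn0 mxrank_eq0 subr_eq0 => /eqP ->; exact: connect0.
have [/eqP YX|YX] := eqVneq (Y - X) 0.
  by move: YX; rewrite subr_eq0 => /eqP ->; exact: connect0.
have [Z [hZ uZ rZ ltZ]] := step hX hY uX uY YX.
apply: connect_trans (connect1 _) (IH Z _ hZ uZ).
  by apply: he => //; rewrite rank_subC.
by rewrite -ltnS; apply: leq_trans ltZ hr.
Qed.

Variable m : nat.

Lemma conjTE k (A : 'M[F]_k) : conjT q A = ctr A.
Proof. by []. Qed.

Lemma ctr_E : ctr (Emx F m) = (Emx F m)^T.
Proof.
apply/matrixP=> i j; rewrite ctrE !mxE.
by case: (_ == _); rewrite ?sig_nat.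
Qed.
Lemma ctr_Et : ctr (Emx F m)^T = Emx F m.
Proof.
apply/matrixP=> i j; rewrite ctrE !mxE.
by case: (_ == _); rewrite ?sig_nat.
Qed.

Lemma ctr_pad0 (X : 'M[F]_m) : ctr (@pad0 F m.+1 X) = @pad0 F m.+1 (ctr X).
Proof.
apply/matrixP=> a b; rewrite ctrE.
case: (unliftP ord_max a) => [i ->|->]; last by rewrite pad0_lm pad0_ml rmorph0.
case: (unliftP ord_max b) => [j ->|->]; last by rewrite pad0_ml pad0_lm rmorph0.
by rewrite !pad0_ll ctrE.
Qed.

Lemma rank_unitLR k (P Q A : 'M[F]_k) : P \in unitmx -> Q \in unitmx ->
  \rank (P *m A *m Q) = \rank A.
Proof.
move=> uP uQ; rewrite mxrankMfree ?row_free_unit //.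
apply/eqP; rewrite eqn_leq mxrankM_maxr /=.
by rewrite -{1}(mulKmx uP A); apply: mxrankM_maxr.
Qed.

Definition rP (P : 'M[F]_m.+1) : 'rV[F]_m.+1 := delta_mx 0 ord_max *m invmx P.

Lemma rP_neq0 P : P \in unitmx -> rP P != 0.
Proof.
move=> uP; apply/eqP => h.
have : rP P *m P = 0 by rewrite h mul0mx.
rewrite /rP mulmxKV // => /matrixP /(_ 0 ord_max); rewrite !mxE !eqxx /=.
by move/eqP; rewrite oner_eq0.
Qed.

Definition fP (P : 'M[F]_m.+1) (X : 'M[F]_m) := P *m @pad0 F m.+1 X *m ctr P.

Lemma SsetE P : Sset q P = [set fP P X | X in HGL F q m].
Proof. by []. Qed.

Lemma HGLP (X : 'M[F]_m) : reflect (ctr X = X /\ X \in unitmx) (X \in HGL F q m).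
Proof. by rewrite inE; apply: (iffP andP) => [[/eqP]|[/eqP]]. Qed.

Lemma VrkP (A : 'M[F]_m.+1) : reflect (ctr A = A /\ \rank A = m) (A \in Vrk F q m.+1).
Proof. by rewrite inE; apply: (iffP andP) => [[/eqP ? /eqP]|[/eqP ? /eqP]]. Qed.

Lemma fP_rank P X Y : P \in unitmx -> \rank (fP P X - fP P Y) = \rank (X - Y).
Proof.
move=> uP; rewrite /fP -mulmxBl -mulmxBr -pad0B rank_unitLR ?ctr_unit //.
exact: rank_pad0.
Qed.

Lemma S1 P X : P \in unitmx -> X \in HGL F q m -> fP P X \in Vrk F q m.+1.
Proof.
move=> uP /HGLP [hX uX]; apply/VrkP; split.
  by rewrite /fP !ctrM ctrK ctr_pad0 hX mulmxA.
by rewrite /fP rank_unitLR ?ctr_unit // rank_pad0 mxrank_unit.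
Qed.

Lemma S2 P X (v : 'rV[F]_m.+1) : P \in unitmx -> X \in unitmx ->
  (v *m fP P X = 0) <-> (exists c, v = c *: rP P).
Proof.
move=> uP uX; split => [h|[c ->]].
  have h2 : (v *m P) *m @pad0 F m.+1 X = 0.
    by have := congr1 (mulmx^~ (invmx (ctr P))) h; rewrite mul0mx /fP !mulmxA mulmxK ?ctr_unit.
  exists ((v *m P) 0 ord_max); rewrite /rP scalemxAl -(ker_pad0 uX h2) mulmxK //.
rewrite -scalemxAl /fP /rP !mulmxA mulmxKV // max_pad0.
by rewrite mul0mx scaler0.
Qed.

Lemma nz_row k l (K : 'M[F]_(k, l)) : K != 0 -> exists i, row i K != 0.
Proof.
move=> K0; case: (pickP (fun i => row i K != 0)) => [i hi|hn]; first by exists i.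
case/eqP: K0; apply/row_matrixP => i; rewrite row0; exact/eqP/negbFE/(hn i).
Qed.

Lemma ker_vec (B : 'M[F]_m.+1) : \rank B = m -> exists2 u : 'rV_m.+1, u != 0 & u *m B = 0.
Proof.
move=> rB; have : kermx B != 0 by rewrite -mxrank_eq0 mxrank_ker rB subSnn.
case/nz_row => i hi; exists (row i (kermx B)) => //.
by rewrite -row_mul mulmx_ker row0.
Qed.

Lemma S3 P B : P \in unitmx -> B \in Vrk F q m.+1 -> rP P *m B = 0 -> B \in Sset q P.
Proof.
move=> uP /VrkP [hB rB] h.
set B' := invmx P *m B *m invmx (ctr P).
have r0 : (delta_mx 0 ord_max : 'rV[F]_m.+1) *m B' = 0.
  rewrite /B' !mulmxA; change (rP P *m B *m invmx (ctr P) = 0); by rewrite h mul0mx.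
have hB' : ctr B' = B' by rewrite /B' !ctrM !ctr_inv ctrK hB mulmxA.
have rowm b : B' ord_max b = 0.
  by have := congr1 (fun M : 'rV[F]_m.+1 => M 0 b) r0; rewrite -rowE !mxE.
pose Y := (Emx F m)^T *m B' *m Emx F m.
have BY : B' = @pad0 F m.+1 Y.
  apply/matrixP => a b.
  case: (unliftP ord_max a) => [i ->|->]; last by rewrite pad0_ml rowm.
  case: (unliftP ord_max b) => [j ->|->]; last by rewrite pad0_lm -hB' ctrE rowm rmorph0.
  by rewrite pad0_ll EtBE.
have hY : ctr Y = Y by apply: pad0_inj; rewrite -ctr_pad0 -BY.
have rY : \rank Y = m.
  by rewrite -rank_pad0 -BY /B' rank_unitLR ?unitmx_inv ?ctr_unit.
have uY : Y \in unitmx by rewrite -row_free_unit /row_free rY.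
apply/imsetP; exists Y; first by apply/HGLP.
change (B = fP P Y).
by rewrite /fP -BY /B' -!mulmxA mulVmx ?ctr_unit // mulmx1 mulKVmx.
Qed.

Lemma S4 P A B : P \in unitmx -> A \in Sset q P -> @adjV F q m.+1 A B -> B \in Sset q P.
Proof.
move=> uP /imsetP [X hX ->] /and3P [_ vB /eqP r1].
apply: (S3 uP vB).
have /HGLP [hX' uX] := hX.
have rA : rP P *m fP P X = 0 by apply/(S2 _ uP uX); exists 1; rewrite scale1r.
have /VrkP [hA _] := S1 uP hX.
case/VrkP: (vB) => hB rB.
change (\rank (fP P X - B) = 1%N) in r1.
set M := fP P X - B in r1.
have [/eqP rM0|rM0] := eqVneq (rP P *m M) 0.
  by move: rM0; rewrite mulmxBr rA sub0r oppr_eq0 => /eqP.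
have sMB : (M <= B)%MS.
  have s1 : (rP P *m M <= M)%MS := submxMl _ _.
  have rk : \rank (rP P *m M) = 1%N.
    by apply/eqP; rewrite eqn_leq rank_leq_row lt0n mxrank_eq0 rM0.
  have sM : (M <= rP P *m M)%MS by rewrite -(mxrank_leqif_sup s1).2 rk r1.
  by apply: submx_trans sM _; rewrite mulmxBr rA sub0r -mulNmx submxMl.
case/submxP: sMB => D MD.
have hM : ctr M = M by rewrite /M ctrB hA hB.
have MD' : M = B *m ctr D by rewrite -hM MD ctrM hB.
have [u u0 uB] := ker_vec rB.
have uA : u *m fP P X = 0.
  have -> : fP P X = B + M by rewrite /M addrC subrK.
  by rewrite mulmxDr uB MD' mulmxA uB mul0mx addr0.
have [c uc] := (S2 _ uP uX).1 uA.
have c0 : c != 0 by apply: contra_neq u0; rewrite uc => ->; rewrite scale0r.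
have -> : rP P = c^-1 *: u by rewrite uc scalerA mulVf // scale1r.
by rewrite -scalemxAl uB scaler0.
Qed.

Lemma S5 P A : P \in unitmx -> A \in Sset q P ->
  [set B | connect (@adjV F q m.+1) A B] = Sset q P.
Proof.
move=> uP hA; apply/setP => B; rewrite inE; apply/idP/idP.
  case/connectP => p hp ->; elim: p A hA hp => [|x p IH] A hA //=.
  by case/andP => hAx hpx; apply: IH (S4 uP hA hAx) hpx.
move=> hB; case/imsetP: hA => X hX ->; case/imsetP: hB => Y hY ->.
have /HGLP [hX' uX] := hX; have /HGLP [hY' uY] := hY.
apply: (hgl_connect (f := fP P)) => // X' Y' hX1 hY1 uX1 uY1 r1.
have hX2 : X' \in HGL F q m by apply/HGLP.
have hY2 : Y' \in HGL F q m by apply/HGLP.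
by rewrite /adjV !S1 // fP_rank // r1.
Qed.

Lemma S6 (v : 'rV[F]_m.+1) : v != 0 ->
  exists P, P \in unitmx /\ exists2 c, c != 0 & v = c *: rP P.
Proof.
move=> v0.
have rv : \rank v = 1%N by apply/eqP; rewrite eqn_leq rank_leq_row lt0n mxrank_eq0.
have ve := mulmx_ebase v; rewrite rv in ve.
have pidE : pid_mx 1 = delta_mx 0 0 :> 'M[F]_(1, m.+1).
  by apply/matrixP => i j; rewrite !mxE ord1 eqxx /= andbT eq_sym.
set R := row_ebase v in ve.
set Q := xrow 0 ord_max R.
have uQ : Q \in unitmx by rewrite /Q xrowE unitmx_mul unitmx_perm row_ebase_unit.
exists (invmx Q); split; first by rewrite unitmx_inv.
exists (col_ebase v 0 0).
  apply: contra_neq v0 => c0.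
  by rewrite -ve [col_ebase v]mx11_scalar c0 mul_scalar_mx !scale0r mul0mx.
rewrite /rP invmxK -rowE /Q xrowEsub row_rowsub tpermR.
rewrite -{1}ve [col_ebase v]mx11_scalar mul_scalar_mx pidE -scalemxAl -rowE.
by rewrite [X in _ = X *: _]mxE eqxx mulr1n.
Qed.

Lemma S7 A : A \in Vrk F q m.+1 -> exists2 P, P \in unitmx & A \in Sset q P.
Proof.
move=> hA; case/VrkP: (hA) => _ rA.
have [u u0 uA] := ker_vec rA.
have [P [uP [c c0 uc]]] := S6 u0.
exists P => //; apply: (S3 uP hA).
have -> : rP P = c^-1 *: u by rewrite uc scalerA mulVf // scale1r.
by rewrite -scalemxAl uA scaler0.
Qed.

Lemma HGL1 : 1%:M \in HGL F q m.
Proof. by apply/HGLP; rewrite ctr1 unitmx1. Qed.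

Lemma fP1 P : P \in unitmx -> fP P 1%:M \in Sset q P.
Proof. by move=> uP; apply/imsetP; exists 1%:M => //; exact: HGL1. Qed.

Lemma compsE : @components F q m.+1 = [set @Sset F q m.+1 P | P : 'M[F]_m.+1 & P \in unitmx].
Proof.
apply/setP => C; apply/imsetP/imsetP.
  case=> A hA ->; have [P uP hAP] := S7 hA.
  by exists P; rewrite ?inE // (S5 uP hAP).
case=> P; rewrite inE => uP ->.
by exists (fP P 1%:M); [exact: S1 uP HGL1 | rewrite (S5 uP (fP1 uP))].
Qed.

Definition Kof (C : {set 'M[F]_m.+1}) : {set 'rV[F]_m.+1} :=
  [set v | (v != 0) && [exists A in C, v *m A == 0]].

Lemma KofS P v : P \in unitmx ->
  (v \in Kof (Sset q P)) <-> (v != 0 /\ exists c, v = c *: rP P).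
Proof.
move=> uP; rewrite inE; split.
  case/andP => v0 /existsP [A /andP [/imsetP [X hX ->] /eqP h]]; split => //.
  have /HGLP [_ uX] := hX.
  exact: (S2 _ uP uX).1 h.
case=> v0 hc; rewrite v0 /=; apply/existsP; exists (fP P 1%:M).
by rewrite fP1 //=; apply/eqP/(S2 _ uP (unitmx1 _ _)).
Qed.

Lemma rP_in P : P \in unitmx -> rP P \in Kof (Sset q P).
Proof. by move=> uP; apply: (proj2 (KofS _ uP)); split; [exact: rP_neq0 | exists 1; rewrite scale1r]. Qed.

Lemma Kof_card P : P \in unitmx -> #|Kof (Sset q P)| = #|F|.-1.
Proof.
move=> uP.
have -> : Kof (Sset q P) = (fun c => c *: rP P) @: [set~ 0].
  apply/setP => v; apply/idP/imsetP.
    case/(KofS _ uP) => v0 [c vc]; exists c => //; rewrite !inE.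
    by apply: contra_neq v0; rewrite vc => ->; rewrite scale0r.
  case=> c hc ->; have c0 : c != 0 by move: hc; rewrite !inE.
  apply: (proj2 (KofS _ uP)); split; last by exists c.
  by rewrite scalemx_eq0 negb_or c0 rP_neq0.
rewrite card_in_imset ?cardsC1 // => c d _ _ /eqP.
rewrite -subr_eq0 -scalerBl scalemx_eq0 (negbTE (rP_neq0 uP)) orbF subr_eq0.
by move/eqP.
Qed.

Lemma Kof_eq P1 P2 v : P1 \in unitmx -> P2 \in unitmx ->
  v \in Kof (Sset q P1) -> v \in Kof (Sset q P2) -> Sset q P1 = Sset q P2.
Proof.
move=> u1 u2 /(KofS _ u1) [v0 [c1 e1]] /(KofS _ u2) [_ [c2 e2]].
have c10 : c1 != 0 by apply: contra_neq v0; rewrite e1 => ->; rewrite scale0r.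
set A2 := fP P2 1%:M.
have hA2 : A2 \in Sset q P2 := fP1 u2.
have vA2 : rP P1 *m A2 = 0.
  have -> : rP P1 = c1^-1 *: v by rewrite e1 scalerA mulVf // scale1r.
  rewrite -scalemxAl; apply/eqP; rewrite scalemx_eq0; apply/orP; right; apply/eqP.
  by apply/(S2 _ u2 (unitmx1 _ _)); exists c2.
have hA1 : A2 \in Sset q P1 by apply: S3 u1 (S1 u2 HGL1) vA2.
by rewrite -(S5 u1 hA1) (S5 u2 hA2).
Qed.

Lemma count_comps : (#|@components F q m.+1| * #|F|.-1)%N = (#|F| ^ m.+1).-1.
Proof.
set comps := @components F q m.+1.
pose D := [set v : 'rV[F]_m.+1 | v != 0].
have cD : #|D| = (#|F| ^ m.+1).-1.
  have -> : D = [set~ 0] by apply/setP => v; rewrite !inE.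
  by rewrite cardsC1 card_mx mul1n.
pose Pk := Kof @: comps.
have inc C : C \in comps -> exists2 P, P \in unitmx & C = Sset q P.
  by rewrite /comps compsE => /imsetP [P]; rewrite inE => uP ->; exists P.
have part : partition Pk D.
  apply/and3P; split.
  - apply/eqP/setP => v; apply/bigcupP/idP.
      case=> B /imsetP [C hC ->]; have [P uP ->] := inc C hC.
      by case/(KofS _ uP) => v0 _; rewrite inE.
    rewrite inE => v0; have [P [uP [c c0 vc]]] := S6 v0.
    exists (Kof (Sset q P)); last by apply: (proj2 (KofS _ uP)); split => //; exists c.
    by apply: imset_f; rewrite /comps compsE; apply: imset_f; rewrite inE.
  - apply/trivIsetP => B1 B2 /imsetP [C1 hC1 ->] /imsetP [C2 hC2 ->] neq.
    have [P1 u1 e1] := inc C1 hC1; have [P2 u2 e2] := inc C2 hC2.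
    rewrite -setI_eq0; apply/eqP/setP => v; rewrite inE in_set0.
    apply/negP => /andP [h1 h2]; case/eqP: neq.
    by have := Kof_eq u1 u2 (v := v); rewrite -e1 -e2 => /(_ h1 h2) ->.
  - rewrite /Pk; apply/negP => /imsetP [C hC e]; have [P uP eC] := inc C hC.
    by have := rP_in uP; rewrite -eC -e inE.
rewrite -cD (@card_uniform_partition _ #|F|.-1 _ _ _ part).
  congr (_ * _)%N; symmetry; rewrite card_in_imset // => C1 C2 hC1 hC2 e.
  have [P1 u1 e1] := inc C1 hC1; have [P2 u2 e2] := inc C2 hC2.
  rewrite e1 e2 in e *; apply: (Kof_eq u1 u2 (rP_in u1)); by rewrite -e rP_in.
move=> B /imsetP [C hC ->]; have [P uP ->] := inc C hC; exact: Kof_card.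
Qed.

Lemma main_m :
  [/\ #|@components F q m.+1| = ((q ^ (2 * m.+1) - 1) %/ (q ^ 2 - 1))%N,
      @components F q m.+1 = [set @Sset F q m.+1 P | P : 'M[F]_m.+1 & P \in unitmx]
    & forall C, C \in @components F q m.+1 ->
        exists f : 'M[F]_(m.+1.-1) -> 'M[F]_m.+1,
          [/\ {in @HGL F q m.+1.-1 &, injective f},
              C = f @: @HGL F q m.+1.-1
            & {in @HGL F q m.+1.-1 &, forall X Y,
                 (\rank (f X - f Y)%R == 1)%N = (\rank (X - Y)%R == 1)%N}]].
Proof.
split.
- have h := count_comps; rewrite hF -expnM -!subn1 in h.
  have q2 : (0 < q ^ 2 - 1)%N.
    by rewrite subn_gt0 (ltn_exp2l 0) //; lia.
  by rewrite -h mulnK.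
- exact: compsE.
move=> C; rewrite compsE => /imsetP [P]; rewrite inE => uP ->.
exists (fP P); split.
- move=> X Y _ _ h; apply: pad0_inj.
  have := congr1 (fun M => invmx P *m M *m invmx (ctr P)) h.
  by rewrite /fP !mulmxA mulVmx // !mul1mx !mulmxK ?ctr_unit.
- by [].
- by move=> X Y _ _; rewrite fP_rank.
Qed.
End Sig.

Unset Implicit Arguments.
Set Strict Implicit.

Theorem lemma3p7 (F : finFieldType) (q n : nat)
  (hF : #|F| = (q ^ 2)%N) (hq : (3 <= q)%N) (hn : (2 <= n)%N) :
  [/\ #|@components F q n| = ((q ^ (2 * n) - 1) %/ (q ^ 2 - 1))%N,
      @components F q n = [set @Sset F q n P | P : 'M[F]_n & P \in unitmx]
    & forall C, C \in @components F q n ->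
        exists f : 'M[F]_(n.-1) -> 'M[F]_n,
          [/\ {in @HGL F q n.-1 &, injective f},
              C = f @: @HGL F q n.-1
            & {in @HGL F q n.-1 &, forall X Y,
                 (\rank (f X - f Y)%R == 1)%N = (\rank (X - Y)%R == 1)%N}]].
Proof.
have hq0 : (0 < q)%N by lia.
case: n hn => [|m] // _.
exact: main_m.
Qed.
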